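(* Let $G$ be a graph with maximum degree $\Delta$, let $\mathrm{col}$ be a partial proper coloring of $G$ with colors in $[\Delta+1]$, let $K$ be an almost-clique of an $\epsilon$-almost-clique decomposition of $G$ (for some $\epsilon\in(0,1/3)$), and let $M$ be a colorful matching in $K$ with respect to $\mathrm{col}$. Then for all $v\in K$, \[ |\Psi_K| \ge |\widehat{K}|+1+e_v-a_v+|M|, \] where $\Psi_K=[\Delta+1]\setminus\mathrm{col}(K)$, $\widehat K$ is the set of uncolored nodes of $K$, $e_v=|N(v)\setminus K|$ and $a_v=|K\setminus N(v)|$.
   Context: A partial coloring is a map $\mathrm{col}:V\to[\Delta+1]\cup\{\bot\}$ ($\bot$ meaning uncolored) such that adjacent nodes that are both colored get different colors; $\mathrm{col}(K)$ is the set of colors assigned to colored nodes of $K$. For $\epsilon\in(0,1/3)$, an $\epsilon$-almost-clique decomposition is a partition of $V$ into $V_{\mathrm{sparse}},K_1,\ldots,K_k$ where nodes in $V_{\mathrm{sparse}}$ are $\Omega(\epsilon^2\Delta)$-sparse (sparsity $\zeta_v=\frac1\Delta(\binom{\Delta}{2}-m(N(v)))$, $m(N(v))$ the number of edges inside the neighborhood $N(v)$) and each almost-clique $K_i$ satisfies $|K_i|\le(1+\epsilon)\Delta$, $|N(v)\cap K_i|\ge(1-\epsilon)\Delta$ for $v\in K_i$, and $|N(v)\cap K_i|\le(1-\epsilon/2)\Delta$ for $v\notin K_i$. An anti-edge is a pair of distinct non-adjacent nodes. A colorful matching in $K$ is a set of pairwise disjoint anti-edges with both endpoints in $K$ such that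 the two endpoints of each anti-edge are colored with the same color, and different anti-edges of the matching have different colors. *)

(* Defs.v *)
From mathcomp Require Import all_boot all_order all_algebra.
Set Implicit Arguments. Unset Strict Implicit. Unset Printing Implicit Defensive.
Import Order.TTheory GRing.Theory Num.Theory.

Local Open Scope ring_scope.
Section Graphs.
Variable V : finType.
Variable adj : rel V.

Definition simple_graph : Prop := symmetric adj /\ irreflexive adj.

Definition nbhd (v : V) : {set V} := [set u | adj v u].

Definition deg (v : V) : nat := #|nbhd v|.

Definition max_degree : nat := \max_(v : V) deg v.

(* m(S): number of (undirected) edges with both endpoints in S,
   computed as (number of ordered adjacent pairs in S) / 2 *)
Definition edges_in (R : realFieldType) (S : {set V}) : R :=
  (#|[set p : V * V | [&& p.1 \in S, p.2 \in S & adj p.1 p.2]]|%N)%:R / 2.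

Definition sparsity (R : realFieldType) (Delta : nat) (v : V) : R :=
  (('C(Delta, 2))%:R - edges_in R (nbhd v)) / Delta%:R.

(* partial colouring with colours in [Delta+1]; None = uncoloured *)
Definition partial_proper_coloring (Delta : nat) (col : V -> option 'I_Delta.+1) : Prop :=
  forall u v, adj u v -> col u != None -> col v != None -> col u != col v.

Definition colors_of (Delta : nat) (col : V -> option 'I_Delta.+1) (K : {set V})
  : {set 'I_Delta.+1} := [set c | [exists u in K, col u == Some c]].

Definition Psi (Delta : nat) (col : V -> option 'I_Delta.+1) (K : {set V})
  : {set 'I_Delta.+1} := ~: colors_of col K.

Definition uncolored (Delta : nat) (col : V -> option 'I_Delta.+1) (K : {set V})
  : {set V} := [set u in K | col u == None].

Definition almost_clique (R : realFieldType) (eps : R) (Delta : nat) (K : {set V}) : Prop :=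
  [/\ (#|K|%:R <= (1 + eps) * Delta%:R),
      (forall v, v \in K -> (#|nbhd v :&: K|%:R >= (1 - eps) * Delta%:R)) &
      (forall v, v \notin K -> (#|nbhd v :&: K|%:R <= (1 - eps / 2) * Delta%:R))].

(* eps-almost-clique decomposition: V = Vsparse ⊔ K_0 ⊔ ... ⊔ K_(k-1),
   nodes of Vsparse are (c * eps^2 * Delta)-sparse for the constant c > 0
   hidden in the Omega(.) *)
Definition almost_clique_decomposition (R : realFieldType) (c eps : R) (Delta : nat)
  (Vs : {set V}) (k : nat) (Ks : 'I_k -> {set V}) : Prop :=
  [/\ (forall i j, i != j -> [disjoint Ks i & Ks j]),
      (forall i, [disjoint Vs & Ks i]),
      (forall v, v \in Vs \/ exists i, v \in Ks i),
      (forall v, v \in Vs -> sparsity R Delta v >= c * eps ^+ 2 * Delta%:R) &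
      (forall i, almost_clique eps Delta (Ks i))].

Definition anti_edge (e : {set V}) : Prop :=
  exists u w, [/\ e = [set u; w], u != w & ~~ adj u w].

Definition colorful_matching (Delta : nat) (col : V -> option 'I_Delta.+1)
  (K : {set V}) (M : {set {set V}}) : Prop :=
  [/\ (forall e, e \in M -> anti_edge e /\ e \subset K),
      (forall e f, e \in M -> f \in M -> e != f -> [disjoint e & f]),
      (forall e, e \in M -> exists c, forall u, u \in e -> col u = Some c) &
      (forall e f u w, e \in M -> f \in M -> e != f -> u \in e -> w \in f ->
         col u != col w)].

End Graphs.

(* Main.v *)
Require Import Defs.
From mathcomp Require Import all_boot all_order all_algebra.
From mathcomp Require Import zify.
Import Order.TTheory GRing.Theory Num.Theory.

Theorem claim2p1 (V : finType) (adj : rel V) (R : realFieldType) (c eps : R)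
  (Delta : nat) (col : V -> option 'I_Delta.+1)
  (Vs : {set V}) (k : nat) (Ks : 'I_k -> {set V}) (i : 'I_k)
  (M : {set {set V}}) :
  simple_graph adj ->
  Delta = max_degree adj ->
  partial_proper_coloring adj col ->
  (0 < eps)%R -> (eps < 1 / 3)%R -> (0 < c)%R ->
  almost_clique_decomposition adj c eps Delta Vs Ks ->
  colorful_matching adj col (Ks i) M ->
  forall v, v \in Ks i ->
    (#|Psi col (Ks i)|%:Z >=
       #|uncolored col (Ks i)|%:Z + 1 + #|nbhd adj v :\: Ks i|%:Z
       - #|Ks i :\: nbhd adj v|%:Z + #|M|%:Z)%R.
Proof.
move=> _ HD _ _ _ _ _ [HM1 HM2 HM3 _] v vK.
set K := Ks i.
set U := uncolored col K.
set C := K :\: U.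
have inC : forall x, (x \in C) = (x \in K) && (col x != None).
  move=> x; rewrite /C /U /uncolored in_setD inE.
  by case: (x \in K); case: (col x).
have UK : U \subset K by apply/subsetP => x; rewrite inE => /andP[].
have cardC : #|C| + #|U| = #|K|.
  by rewrite cardsD (setIidPr UK) subnK // subset_leq_card.
pose p1 (e : {set V}) := odflt v [pick x in e].
pose p2 (e : {set V}) := odflt v [pick x in e :\ p1 e].
have Hp : forall e, e \in M -> [/\ p1 e \in e, p2 e \in e & p2 e != p1 e].
  move=> e eM; have [[u [w [-> uw _]]] _] := HM1 e eM.
  have h1 : p1 [set u; w] \in [set u; w].
    rewrite /p1; case: pickP => [x //|/(_ u)]; by rewrite !inE eqxx.
  have h2 : p2 [set u; w] \in [set u; w] :\ p1 [set u; w].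
    rewrite /p2; case: pickP => [x //|H].
    exfalso; move: h1; rewrite !inE => /orP[/eqP E|/eqP E].
      by move: (H w); rewrite !inE E eq_sym uw eqxx orbT.
    by move: (H u); rewrite !inE E uw eqxx.
  by move: h2; rewrite in_setD1 => /andP[a b]; split.
have Hcol : forall e, e \in M -> forall x, x \in e -> x \in C.
  move=> e eM x xe; have [_ /subsetP eK] := HM1 e eM.
  have [c0 Hc] := HM3 e eM.
  by rewrite inC; apply/andP; split; [exact: eK | rewrite (Hc x xe)].
set X := p2 @: M.
have cardX : #|X| = #|M|.
  apply: card_in_imset => e f eM fM E.
  apply/eqP; apply/negPn/negP => ef.
  have := HM2 e f eM fM ef; rewrite disjoint_sym => /disjoint_setI0 /setP /(_ (p2 e)).
  have [_ h _] := Hp e eM; have [_ h' _] := Hp f fM.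
  by rewrite !inE h E h'.
have XC : X \subset C.
  apply/subsetP => x /imsetP[e eM ->]; have [_ h _] := Hp e eM; exact: Hcol e eM _ h.
pose h (u : V) : 'I_Delta.+1 := odflt ord0 (col u).
have colsub : colors_of col K \subset h @: (C :\: X).
  apply/subsetP => c0; rewrite inE => /existsP[u /andP[uK /eqP cu]].
  have uC : u \in C by rewrite inC cu uK.
  case uX: (u \in X).
    move/imsetP: uX => [e eM ue].
    have [h1 h2 h12] := Hp e eM.
    have [c1 Hc] := HM3 e eM.
    apply/imsetP; exists (p1 e).
      rewrite inE (Hcol e eM _ h1) andbT; apply/imsetP => [[f fM E]].
      have [_ g2 g12] := Hp f fM.
      case: (eqVneq e f) => [ef|ef].
        by subst f; rewrite E eqxx in h12.
      have := HM2 e f eM fM ef; move/disjoint_setI0/setP/(_ (p1 e)).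
      by rewrite !inE h1 E g2.
    by rewrite /h (Hc _ h1) -(Hc _ h2) -ue cu.
  by apply/imsetP; exists u; [rewrite in_setD uX uC | rewrite /h cu].
have colle : #|colors_of col K| + #|M| <= #|C|.
  have := subset_leq_card colsub; have := leq_imset_card h (C :\: X).
  rewrite cardsD (setIidPr XC) cardX => a b.
  have := subset_leq_card XC; rewrite cardX; move=> MC.
  by rewrite addnC -leq_subRL //; exact: leq_trans b a.
have Psic : #|Psi col K| = Delta.+1 - #|colors_of col K|.
  by rewrite /Psi [LHS]cardsCs setCK card_ord.
have colmax : #|colors_of col K| <= Delta.+1 by have := max_card (mem (colors_of col K)); rewrite card_ord.
have degv : #|nbhd adj v| <= Delta.
  by rewrite HD /max_degree; exact: (leq_bigmax v).
have e1 := cardsID K (nbhd adj v).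
have e2 := cardsID (nbhd adj v) K.
rewrite setIC in e2.
rewrite Psic.
clearbody K U C p1 p2 X h.
move: Psic colle cardC colmax degv e1 e2.
move: #|Psi col K| #|colors_of col K| #|M| #|C| #|U| #|K| #|nbhd adj v :&: K| #|nbhd adj v :\: K| #|K :&: nbhd adj v| #|K :\: nbhd adj v| #|nbhd adj v|.
lia.
Qed.
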